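(* Let $x,y,z$ be positive integers and let $p$ be a prime with $p\ge 3$ and $p\notin\{3,5\}$. If $\gcd(x,y)=1$ and $x^{p}+y^{p}=z^{p}$, then there exist positive integers $a,b,c$ such that $\gcd(a,b)=1$ and $a^{p}-4b^{p}=c^{2}$. *)

(* Defs.v *)
From mathcomp Require Import all_boot.

(* Main.v *)
Require Import Defs.
From mathcomp Require Import all_boot zify.

Lemma cop_zx (x y z p : nat) : 0 < p -> coprime x y -> x ^ p + y ^ p = z ^ p -> coprime z x.
Proof.
move=> p0 cxy e.
set g := gcdn z x.
have gx : g %| x by exact: dvdn_gcdr.
have gz : g %| z by exact: dvdn_gcdl.
have gyp : g %| y ^ p.
  by rewrite -(dvdn_addr _ (dvdn_exp p0 gx)) e (dvdn_exp p0 gz).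
have cgy : coprime g (y ^ p) by apply: coprimeXr; exact: coprime_dvdl gx cxy.
have := coprime_dvdr gyp cgy.
by rewrite /coprime gcdnn.
Qed.

Lemma sqid (u v : nat) : v <= u -> (u + v) ^ 2 = 4 * (u * v) + (u - v) ^ 2.
Proof.
move=> h; rewrite -(subnKC h); set d := u - v.
rewrite addKn. rewrite !expnS !expn0 !muln1. nia.
Qed.

Theorem theorem1 (x y z p : nat) :
  0 < x -> 0 < y -> 0 < z ->
  prime p -> 3 <= p -> p != 3 -> p != 5 ->
  coprime x y ->
  x ^ p + y ^ p = z ^ p ->
  exists a b c : nat,
    [/\ 0 < a, 0 < b, 0 < c, coprime a b & a ^ p = 4 * b ^ p + c ^ 2].
Proof.
move=> x0 y0 z0 pp p3 _ _ cxy e.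
have p0 : 0 < p by apply: leq_trans p3.
have czx := cop_zx _ _ _ _ p0 cxy e.
have czy : coprime z y.
  by apply: (cop_zx _ _ _ _ p0 _ (etrans (addnC _ _) e)); rewrite coprime_sym.
have cab : coprime (z ^ 2) (x * y) by rewrite coprimeXl // coprimeMr czx czy.
have hxy : x != y.
  apply/eqP=> exy; move: cxy e; rewrite exy /coprime gcdnn => /eqP ->.
  rewrite exp1n => h.
  have [z1|z2] := leqP z 1.
  - have : z = 1 by lia.
    by move=> ez; move: h; rewrite ez exp1n.
  - have : 2 ^ 3 <= z ^ p.
      apply: (@leq_trans (2 ^ p)); first by rewrite leq_exp2l.
      by rewrite leq_exp2r.
    by rewrite -h.
have key : forall u v, v <= u -> u ^ p + v ^ p = z ^ p ->
    (z ^ 2) ^ p = 4 * (u * v) ^ p + (u ^ p - v ^ p) ^ 2.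
  move=> u v vu ee; rewrite -expnM mulnC expnM -ee expnMn.
  by apply: sqid; rewrite leq_exp2r.
case: (leqP y x) => hyx.
- exists (z ^ 2), (x * y), (x ^ p - y ^ p); split => //.
  + by rewrite expn_gt0 z0.
  + by rewrite muln_gt0 x0 y0.
  + by rewrite subn_gt0 ltn_exp2r // ltn_neqAle eq_sym hxy hyx.
  + exact: key.
- exists (z ^ 2), (x * y), (y ^ p - x ^ p); split => //.
  + by rewrite expn_gt0 z0.
  + by rewrite muln_gt0 x0 y0.
  + by rewrite subn_gt0 ltn_exp2r.
  + by rewrite (mulnC x y); apply: key; [exact: ltnW | rewrite addnC].
Qed.
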